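(* Assume in addition that $\lambda_A>0$ and that the dataset is balanced, i.e. $s_{N+1}=s_1$. Let $\alpha=1/8$ and let $M$ be a positive integer with $M\ge 16/\lambda_A$ (the paper takes $M=16/\lambda_A$). Then the iterates of TD-SVRG (Algorithm 1) satisfy, for every $m\ge0$, $$\mathbb E[f_d(\tilde\theta_m)]\le\left(\tfrac23\right)^m f_d(\tilde\theta_0).$$
   Context: Finite-sample setting. Let $\mathcal S$ be a finite state space, $\phi:\mathcal S\to\mathbb R^d$ a feature map with $\|\phi(s)\|_2\le 1$ for all $s$, $r:\mathcal S\times\mathcal S\to\mathbb R$ a reward function and $\gamma\in[0,1)$. For a pair of states $(s,s')$ and $\theta\in\mathbb R^d$ let $g_{s,s'}(\theta)=(r(s,s')+\gamma\phi(s')^T\theta-\phi(s)^T\theta)\phi(s)$. A dataset is a state trajectory $s_1,\dots,s_{N+1}$, giving the $N$ pairs $(s_t,s_{t+1})$, $t=1,\dots,N$. Let $A_d=\frac1N\sum_{t=1}^N\phi(s_t)(\phi(s_t)-\gamma\phi(s_{t+1}))^T$ and $b_d=\frac1N\sum_{t=1}^N r(s_t,s_{t+1})\phi(s_t)$, so that $\bar g(\theta):=\frac1N\sum_{t=1}^N g_{s_t,s_{t+1}}(\theta)=-A_d\theta+b_d$. Assume $A_d$ is nonsingular and let $\theta^*=A_d^{-1}b_d$. Let $\lambda_A$ denote the minimum eigenvalue of $(A_d+A_d^T)/2$. Define $f_d(\theta)=(\theta-\theta^* )^TA_d(\theta-\theta^* )$. Algorithm 1 (TD-SVRG): given $\alpha>0$,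 an integer $M\ge1$ and an initial $\tilde\theta_0\in\mathbb R^d$, for epochs $m=1,2,\dots$: set $\tilde\theta=\tilde\theta_{m-1}$, compute $\bar g(\tilde\theta)$, set $\theta_0=\tilde\theta$; for $t=1,\dots,M$ draw an index $i_t$ uniformly from $\{1,\dots,N\}$, independently of everything else, put $(s,s')=(s_{i_t},s_{i_t+1})$, $v_t=g_{s,s'}(\theta_{t-1})-g_{s,s'}(\tilde\theta)+\bar g(\tilde\theta)$ and $\theta_t=\theta_{t-1}+\alpha v_t$; finally set $\tilde\theta_m=\theta_{t'}$ where $t'$ is drawn uniformly from $\{0,\dots,M-1\}$ independently of everything else. *)

(* Defs.v *)
From HB Require Import structures.
From mathcomp Require Import all_boot all_order all_algebra.
From mathcomp Require Import reals.
Set Implicit Arguments. Unset Strict Implicit. Unset Printing Implicit Defensive.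
Import Order.TTheory GRing.Theory Num.Theory.
Local Open Scope ring_scope.

Section TDSVRG.
Variables (R : realType) (S : finType) (d : nat).
Variables (phi : S -> 'cV[R]_d) (r : S -> S -> R) (gamma : R).

Definition dotv (u v : 'cV[R]_d) : R := (u^T *m v) 0 0.

Definition gss (s s' : S) (theta : 'cV[R]_d) : 'cV[R]_d :=
  (r s s' + gamma * dotv (phi s') theta - dotv (phi s) theta) *: phi s.

(* Dataset: trajectory traj 0, ..., traj N (= s_1, ..., s_{N+1});
   pair number i : 'I_N is (traj i, traj i.+1). *)
Variables (N : nat) (traj : nat -> S).

Definition A_d : 'M[R]_d :=
  N%:R^-1 *: \sum_(t < N) (phi (traj t) *m (phi (traj t) - gamma *: phi (traj t.+1))^T).

Definition b_d : 'cV[R]_d :=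
  N%:R^-1 *: \sum_(t < N) (r (traj t) (traj t.+1) *: phi (traj t)).

Definition gbar (theta : 'cV[R]_d) : 'cV[R]_d :=
  N%:R^-1 *: \sum_(t < N) gss (traj t) (traj t.+1) theta.

Definition theta_star : 'cV[R]_d := invmx A_d *m b_d.

Definition f_d (theta : 'cV[R]_d) : R :=
  ((theta - theta_star)^T *m A_d *m (theta - theta_star)) 0 0.

Variable alpha : R.

Definition svrg_step (thetat : 'cV[R]_d) (theta : 'cV[R]_d) (i : 'I_N) : 'cV[R]_d :=
  let s := traj i in let s' := traj i.+1 in
  theta + alpha *: (gss s s' theta - gss s s' thetat + gbar thetat).

Definition inner_iter (thetat : 'cV[R]_d) (idx : seq 'I_N) : 'cV[R]_d :=
  foldl (svrg_step thetat) thetat idx.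

Variable M : nat.

(* Expectation operator of one epoch: (P h)(thetat) = E[h(tilde theta_m) | tilde theta_{m-1} = thetat],
   averaging uniformly over the M i.i.d. uniform indices i_1..i_M in 'I_N
   and the independent uniform t' in {0,...,M-1}; tilde theta_m = theta_{t'}. *)
Definition epoch_exp (h : 'cV[R]_d -> R) (thetat : 'cV[R]_d) : R :=
  ((N ^ M)%:R * M%:R)^-1 *
  \sum_(idx : M.-tuple 'I_N) \sum_(t' < M) h (inner_iter thetat (take t' idx)).

Definition expect_after (m : nat) (h : 'cV[R]_d -> R) (theta0 : 'cV[R]_d) : R :=
  iter m epoch_exp h theta0.

End TDSVRG.

(* Main.v *)
Require Import Defs.
From HB Require Import structures.
From mathcomp Require Import all_boot all_order all_algebra.
From mathcomp Require Import reals.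
From mathcomp Require Import complex spectral sesquilinear ring lra.
Set Implicit Arguments. Unset Strict Implicit.
Import Order.TTheory GRing.Theory Num.Theory.
Local Open Scope ring_scope.
Local Open Scope sesquilinear_scope.
Section Ray.
Variable R : realType.
Local Notation C := (R[i]).
Local Notation fc := (real_complex R).

Lemma real_Re (z : C) : z \is Num.real -> z = (complex.Re z)%:C%C.
Proof.
case: z => a b; rewrite realE !lecE /= => /orP[]/andP[/eqP h _]; by subst.
Qed.

Lemma rayleigh n (Sm : 'M[R]_n) (lam : R) :
  Sm^T = Sm -> (forall mu, eigenvalue Sm mu -> lam <= mu) ->
  forall x : 'cV[R]_n, lam * (x^T *m x) 0 0 <= (x^T *m Sm *m x) 0 0.
Proof.
move=> Ssym Hev x.
set Sc := map_mx fc Sm.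
have herm : Sc \is hermsymmx.
  apply/is_hermitianmxP; rewrite expr0 scale1r /Sc map_trmx -map_mx_comp Ssym.
  apply/matrixP => i j; rewrite !mxE /=; exact: (esym (conjc_real _)).
have /orthomx_spectralP hSc := hermitian_normalmx herm.
set P := spectralmx Sc in hSc; set D := spectral_diag Sc in hSc.
have Pu : P \is unitarymx by apply: spectral_unitarymx.
have Punit : P \in unitmx by apply: unitarymx_unit.
have iP : invmx P = P ^t* by apply: invmx_unitary.
have Dreal : D \is a realmx by apply: hermitian_spectral_diag_real.
have HD : forall j, lam <= complex.Re (D 0 j).
  move=> j; apply: Hev; rewrite -(eigenvalue_map fc).
  suff EV : eigenvalue Sc (D 0 j).
    by rewrite {1}(real_Re (mxOverP Dreal 0 j)) in EV; exact: EV.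
  apply/eigenvalueP; exists (delta_mx 0 j *m P).
    rewrite -/Sc {1}hSc !mulmxA mulmxK // scalemxAl; congr (_ *m _).
    apply/matrixP => a b; rewrite mul_mx_diag !mxE.
    case: (b =P j) => [->|]; rewrite ?andbT ?andbF ?mulr0 //= ?mul1r ?mulr1 ?mul0r //.
    by rewrite mulrC.
  apply/eqP => h0.
  have := congr1 (mulmx^~ (invmx P)) h0.
  rewrite /= mulmxK // mul0mx => /matrixP /(_ 0 j); rewrite !mxE !eqxx /=.
  by move/eqP; rewrite oner_eq0.
set xc := map_mx fc x.
set y := P *m xc.
have xcT : xc^T = xc ^t* .
  by rewrite map_trmx; apply/matrixP => i j; rewrite !mxE /=; exact: (esym (conjc_real _)).
have EQ : fc ((x^T *m Sm *m x) 0 0) = \sum_j (y j 0)^* * D 0 j * y j 0.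
  have -> : fc ((x^T *m Sm *m x) 0 0) = (map_mx fc (x^T *m Sm *m x)) 0 0.
    by rewrite [RHS]mxE.
  rewrite !map_mxM -/Sc -/xc.
  rewrite -map_trmx xcT hSc iP.
  have -> : xc ^t* *m (P ^t* *m diag_mx D *m P) *m xc =
     y ^t* *m diag_mx D *m y.
    by rewrite /y trmx_mul map_mxM !mulmxA.
  rewrite !mxE; apply: eq_bigr => j _; rewrite mul_mx_diag !mxE.
  done.
have EQ2 : fc ((x^T *m x) 0 0) = \sum_j (y j 0)^* * y j 0.
  have -> : fc ((x^T *m x) 0 0) = (map_mx fc (x^T *m x)) 0 0 by rewrite [RHS]mxE.
  rewrite !map_mxM -/xc.
  rewrite -map_trmx xcT.
  have -> : xc ^t* *m xc = y ^t* *m y.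
    by rewrite /y trmx_mul map_mxM -mulmxA (mulmxA _ P) -iP mulVmx // mul1mx.
  by rewrite !mxE; apply: eq_bigr => j _; rewrite !mxE.
rewrite -lecR rmorphM /= EQ EQ2 mulr_sumr -subr_ge0 -sumrB.
apply: sumr_ge0 => j _.
rewrite (real_Re (mxOverP Dreal 0 j)).
have -> : (y j 0)^* * (complex.Re (D 0 j))%:C%C * y j 0 - (lam%:C)%C * ((y j 0)^* * y j 0)
   = (y j 0 * (y j 0)^*) * (complex.Re (D 0 j) - lam)%:C%C.
  by rewrite rmorphB /=; ring.
apply: mulr_ge0; first exact: mul_conjC_ge0.
by rewrite ler0c subr_ge0.
Qed.
End Ray.
Local Close Scope sesquilinear_scope.

Section Dot.
Variables (R : realType) (d : nat).
Implicit Types (u v w : 'cV[R]_d).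

Lemma dotvE u v : dotv u v = \sum_k u k 0 * v k 0.
Proof. by rewrite /dotv mxE; apply: eq_bigr => k _; rewrite mxE. Qed.
Lemma dotvC u v : dotv u v = dotv v u.
Proof. by rewrite !dotvE; apply: eq_bigr => k _; rewrite mulrC. Qed.
Lemma dotvDr u v w : dotv u (v + w) = dotv u v + dotv u w.
Proof. by rewrite /dotv mulmxDr mxE. Qed.
Lemma dotvZr u v (a : R) : dotv u (a *: v) = a * dotv u v.
Proof. by rewrite /dotv -scalemxAr mxE. Qed.
Lemma dotvNr u v : dotv u (- v) = - dotv u v.
Proof. by rewrite /dotv mulmxN mxE. Qed.
Lemma dotvBr u v w : dotv u (v - w) = dotv u v - dotv u w.
Proof. by rewrite dotvDr dotvNr. Qed.
Lemma dotvDl u v w : dotv (v + w) u = dotv v u + dotv w u.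
Proof. by rewrite dotvC dotvDr !(dotvC u). Qed.
Lemma dotvZl u v (a : R) : dotv (a *: v) u = a * dotv v u.
Proof. by rewrite dotvC dotvZr dotvC. Qed.
Lemma dotvNl u v : dotv (- v) u = - dotv v u.
Proof. by rewrite dotvC dotvNr dotvC. Qed.
Lemma dotvBl u v w : dotv (v - w) u = dotv v u - dotv w u.
Proof. by rewrite dotvDl dotvNl. Qed.
Lemma dotv_sumr n u (F : 'I_n -> 'cV[R]_d) : dotv u (\sum_i F i) = \sum_i dotv u (F i).
Proof. by rewrite /dotv mulmx_sumr summxE. Qed.
Lemma dotv_suml n u (F : 'I_n -> 'cV[R]_d) : dotv (\sum_i F i) u = \sum_i dotv (F i) u.
Proof. by rewrite dotvC dotv_sumr; apply: eq_bigr => i _; rewrite dotvC. Qed.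
Lemma dotv_ge0 u : 0 <= dotv u u.
Proof. by rewrite dotvE; apply: sumr_ge0 => k _; rewrite -expr2 sqr_ge0. Qed.
Lemma dotv_sq2 u v : dotv (u + v) (u + v) <= 2%:R * dotv u u + 2%:R * dotv v v.
Proof.
have := dotv_ge0 (u - v).
rewrite !dotvDl !dotvDr !dotvNl !dotvNr (dotvC v u); lra.
Qed.
Lemma outer_mul (a c y : 'cV[R]_d) : a *m c^T *m y = dotv c y *: a.
Proof.
rewrite -mulmxA [c^T *m y]mx11_scalar -/(dotv c y).
by rewrite mul_mx_scalar.
Qed.
End Dot.

Section Facts.
Variables (R : realType) (S : finType) (d : nat).
Variables (phi : S -> 'cV[R]_d) (r : S -> S -> R) (gamma : R).
Variables (N : nat) (traj : nat -> S).
Hypothesis N0 : (0 < N)%N.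
Hypothesis Au : A_d phi gamma N traj \in unitmx.

Local Notation a t := (phi (traj t)).
Local Notation b t := (phi (traj t.+1)).
Local Notation c t := (phi (traj t) - gamma *: phi (traj t.+1)).
Local Notation Ad := (A_d phi gamma N traj).
Local Notation ts := (theta_star phi r gamma N traj).

Lemma Ad_mul y : Ad *m y = N%:R^-1 *: \sum_(t < N) (dotv (c t) y *: a t).
Proof.
rewrite /A_d -scalemxAl mulmx_suml; congr (_ *: _).
by apply: eq_bigr => t _; rewrite outer_mul.
Qed.

Lemma gss_diff s s' th th' :
  gss phi r gamma s s' th - gss phi r gamma s s' th' =
  - (dotv (phi s - gamma *: phi s') (th - th') *: phi s).
Proof.
rewrite /gss -scalerBl -scaleNr; congr (_ *: _).
rewrite dotvBl !dotvBr !dotvZl; ring.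
Qed.

Lemma gbarE th : gbar phi r gamma N traj th = - (Ad *m (th - ts)).
Proof.
have H : Ad *m ts = b_d phi r N traj by rewrite /theta_star mulKVmx.
rewrite mulmxBr H Ad_mul /gbar /b_d.
rewrite -scalerBr -scalerN; congr (_ *: _).
rewrite -sumrB -sumrN; apply: eq_bigr => t _.
rewrite /gss -scalerBl -scaleNr; congr (_ *: _).
rewrite !dotvBl !dotvZl; ring.
Qed.

Lemma f_dE th : f_d phi r gamma N traj th = dotv (th - ts) (Ad *m (th - ts)).
Proof. by rewrite /f_d -mulmxA. Qed.

End Facts.

Section AvgStep.
Variables (R : realType) (d n : nat).
Hypothesis n0 : (0 < n)%N.

Lemma nR_neq0 : (n%:R : R) != 0.
Proof. by rewrite pnatr_eq0 -lt0n. Qed.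

Lemma avg_step (al : R) (x : 'cV[R]_d) (p q : 'I_n -> 'cV[R]_d) :
  n%:R^-1 * \sum_i dotv (x + al *: (q i - p i - n%:R^-1 *: \sum_j q j))
                        (x + al *: (q i - p i - n%:R^-1 *: \sum_j q j))
   <= dotv x x - 2%:R * al * dotv x (n%:R^-1 *: \sum_i p i)
      + al^+2 * (2%:R * (n%:R^-1 * \sum_i dotv (p i) (p i))
                + 2%:R * (n%:R^-1 * \sum_i dotv (q i) (q i))).
Proof.
set Q := n%:R^-1 *: \sum_j q j.
set v := fun i => q i - p i - Q.
have nQ : n%:R *: Q = \sum_j q j by rewrite /Q scalerA mulfV ?nR_neq0 // scale1r.
have Sv : \sum_i v i = - \sum_i p i.
  by rewrite /v !sumrB sumr_const card_ord -scaler_nat nQ addrAC subrr add0r.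
have Eterm : forall w, dotv (x + al *: w) (x + al *: w) =
   dotv x x + 2%:R * al * dotv x w + al^+2 * dotv w w.
  move=> w; rewrite !dotvDl !dotvDr !dotvZl !dotvZr (dotvC w x); ring.
have Hvv : forall i, dotv (v i) (v i) <= 2%:R * dotv (p i) (p i) + 2%:R * dotv (q i - Q) (q i - Q).
  move=> i; rewrite /v addrAC.
  have := dotv_sq2 (q i - Q) (- p i); rewrite !dotvNl !dotvNr opprK; lra.
have HqQ : \sum_i dotv (q i - Q) (q i - Q) <= \sum_i dotv (q i) (q i).
  have -> : \sum_i dotv (q i - Q) (q i - Q) =
     \sum_i dotv (q i) (q i) - n%:R * dotv Q Q.
    rewrite (eq_bigr (fun i => dotv (q i) (q i) - 2%:R * dotv Q (q i) + dotv Q Q)); last first.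
      by move=> i _; rewrite !dotvBl !dotvBr (dotvC Q (q i)); ring.
    rewrite !big_split /= sumrN sumr_const card_ord -mulr_sumr -dotv_sumr -nQ dotvZr -mulr_natl; ring.
  by rewrite gerBl mulr_ge0 ?ler0n ?dotv_ge0.
under eq_bigr do rewrite Eterm.
rewrite !big_split /= sumr_const card_ord -!mulr_sumr -dotv_sumr Sv dotvNr.
rewrite dotvZr -[dotv x x *+ n]mulr_natr.
have ni : n%:R^-1 * (n%:R : R) = 1 by rewrite mulVf ?nR_neq0.
have ni0 : 0 <= (n%:R : R)^-1 by rewrite invr_ge0 ler0n.
have Hs : \sum_i dotv (q i - p i - Q) (q i - p i - Q) <=
    2%:R * \sum_i dotv (p i) (p i) + 2%:R * \sum_i dotv (q i) (q i).
  apply: (le_trans (ler_sum _ (fun i _ => Hvv i))).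
  rewrite big_split /= -!mulr_sumr; lra.
have al2 : 0 <= al ^+ 2 by rewrite sqr_ge0.
move: Hs.
set Sp := \sum_i dotv (p i) (p i).
set Sq := \sum_i dotv (q i) (q i).
set Svv := \sum_i dotv (q i - p i - Q) (q i - p i - Q).
set X := dotv x (\sum_i p i).
set X0 := dotv x x.
set m := (n%:R : R)^-1.
move=> Hs.
have H2 : m * (al ^+ 2 * Svv) <= m * (al^+2 * (2%:R * Sp + 2%:R * Sq)).
  by apply: ler_wpM2l => //; apply: ler_wpM2l.
have -> : m * (X0 * n%:R + 2%:R * al * - X + al ^+ 2 * Svv) =
   X0 * (m * n%:R) - 2%:R * al * (m * X) + m * (al ^+ 2 * Svv) by ring.
rewrite ni; nra.
Qed.
End AvgStep.

Section Step.
Variables (R : realType) (S : finType) (d : nat).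
Variables (phi : S -> 'cV[R]_d) (r : S -> S -> R) (gamma : R).
Variables (N : nat) (traj : nat -> S).
Hypothesis N0 : (0 < N)%N.
Hypothesis Au : A_d phi gamma N traj \in unitmx.
Hypothesis phi1 : forall s, \sum_(k < d) (phi s k 0) ^+ 2 <= 1.
Hypothesis g0 : 0 <= gamma.
Hypothesis g1 : gamma < 1.
Hypothesis bal : traj N = traj 0%N.

Local Notation a t := (phi (traj t)).
Local Notation c t := (phi (traj t) - gamma *: phi (traj t.+1)).
Local Notation Ad := (A_d phi gamma N traj).
Local Notation ts := (theta_star phi r gamma N traj).

Lemma bal_sum (g : nat -> R) : g N = g 0%N -> \sum_(t < N) g t.+1 = \sum_(t < N) g t.
Proof.
move=> h; apply: (@addrI _ (g 0%N)).
have h1 : \sum_(t < N.+1) g t = g 0%N + \sum_(t < N) g t.+1.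
  by rewrite big_ord_recl; congr (_ + _); apply: eq_bigr => i _; rewrite lift0.
by rewrite -h1 big_ord_recr /= h addrC.
Qed.

Lemma phi_n2 s : dotv (phi s) (phi s) <= 1.
Proof. by rewrite dotvE; under eq_bigr do rewrite -expr2; exact: phi1. Qed.

Lemma G_le (y : 'cV[R]_d) :
  N%:R^-1 * \sum_(t < N) dotv (dotv (c t) y *: a t) (dotv (c t) y *: a t)
   <= 2%:R * dotv y (Ad *m y).
Proof.
rewrite Ad_mul dotvZr dotv_sumr.
have ni0 : 0 <= (N%:R : R)^-1 by rewrite invr_ge0 ler0n.
rewrite mulrA (mulrC 2%:R) -mulrA; apply: ler_wpM2l => //.
apply: (@le_trans _ _ (\sum_(t < N) (dotv (c t) y) ^+ 2)).
  apply: ler_sum => t _; rewrite dotvZl dotvZr mulrA -expr2.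
  by apply: ler_piMr; [exact: sqr_ge0 | exact: phi_n2].
rewrite mulr_sumr -subr_ge0 -sumrB.
have E : forall t : 'I_N, 2%:R * dotv y (dotv (c t) y *: a t) - dotv (c t) y ^+ 2
   = dotv (a t) y ^+ 2 - gamma ^+ 2 * dotv (phi (traj t.+1)) y ^+ 2.
  by move=> t; rewrite dotvZr dotvBl dotvZl (dotvC y); ring.
rewrite (eq_bigr _ (fun t _ => E t)) sumrB -mulr_sumr.
rewrite (@bal_sum (fun k => dotv (phi (traj k)) y ^+ 2)); last by rewrite bal.
rewrite -{1}[\sum_(t < N) _]mul1r -mulrBl.
apply: mulr_ge0; last by apply: sumr_ge0 => t _; exact: sqr_ge0.
by rewrite subr_ge0 expr_le1 // ltW.
Qed.

Lemma one_step (tt th : 'cV[R]_d) :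
  N%:R^-1 * \sum_(i < N) dotv (svrg_step phi r gamma traj (8%:R)^-1 tt th i - ts)
                               (svrg_step phi r gamma traj (8%:R)^-1 tt th i - ts)
  <= dotv (th - ts) (th - ts) - 3%:R / 16%:R * f_d phi r gamma N traj th
     + 16%:R^-1 * f_d phi r gamma N traj tt.
Proof.
set al : R := (8%:R)^-1.
set x := th - ts; set xt := tt - ts.
pose p := fun i : 'I_N => dotv (c i) x *: a i.
pose q := fun i : 'I_N => dotv (c i) xt *: a i.
have Ev : forall i : 'I_N, svrg_step phi r gamma traj al tt th i - ts
   = x + al *: (q i - p i - N%:R^-1 *: \sum_j q j).
  move=> i; rewrite /svrg_step /= gss_diff gbarE // Ad_mul //.
  have -> : th - tt = x - xt by rewrite /x /xt opprB addrA subrK.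
  rewrite dotvBr scalerBl opprB /x addrAC.
  done.
have EP : N%:R^-1 *: \sum_i p i = Ad *m x by rewrite Ad_mul.
have G1 : N%:R^-1 * \sum_i dotv (p i) (p i) <= 2%:R * dotv x (Ad *m x) := G_le x.
have G2 : N%:R^-1 * \sum_i dotv (q i) (q i) <= 2%:R * dotv xt (Ad *m xt) := G_le xt.
under eq_bigr do rewrite Ev.
apply: le_trans (avg_step N0 al x p q) _.
rewrite EP !f_dE -/x -/xt.
have al2 : al ^+ 2 = (64%:R)^-1 by rewrite /al exprVn -natrX.
rewrite al2 /al.
lra.
Qed.

End Step.

Section Expect.
Variables (R : realType) (N : nat).
Hypothesis N0 : (0 < N)%N.

Implicit Types G H : seq 'I_N -> R.

Definition Ek k (G : seq 'I_N -> R) : R :=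
  ((N ^ k)%:R)^-1 * \sum_(t : k.-tuple 'I_N) G t.

Lemma NkR_neq0 k : ((N ^ k)%:R : R) != 0.
Proof. by rewrite pnatr_eq0 expn_eq0 negb_and -lt0n N0. Qed.

Lemma sum_tuple_rcons k (G : seq 'I_N -> R) :
  \sum_(t : k.+1.-tuple 'I_N) G t = \sum_(t : k.-tuple 'I_N) \sum_(i : 'I_N) G (rcons t i).
Proof.
pose h := fun p : k.-tuple 'I_N * 'I_N => rcons_tuple p.1 p.2.
have hinj : injective h.
  move=> [t1 i1] [t2 i2] /(congr1 val) /= /rcons_inj [] /val_inj -> -> //.
have hbij : bijective h.
  by apply: inj_card_bij hinj _; rewrite card_prod !card_tuple card_ord expnSr.
by rewrite (reindex h (onW_bij _ hbij)) /= pair_big.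
Qed.

Lemma Ek_ext k G G' : (forall t : k.-tuple 'I_N, G t = G' t) -> Ek k G = Ek k G'.
Proof. by move=> h; rewrite /Ek; congr (_ * _); apply: eq_bigr => t _; rewrite h. Qed.

Lemma Ek_step k G : Ek k.+1 G = Ek k (fun t => N%:R^-1 * \sum_i G (rcons t i)).
Proof.
rewrite /Ek sum_tuple_rcons -mulr_sumr mulrA expnSr natrM invfM.
done.
Qed.

Lemma Ek_le k G G' : (forall t : k.-tuple 'I_N, G t <= G' t) -> Ek k G <= Ek k G'.
Proof.
move=> h; rewrite /Ek; apply: ler_wpM2l; first by rewrite invr_ge0 ler0n.
by apply: ler_sum => t _.
Qed.

Lemma Ek_ge0 k G : (forall t : k.-tuple 'I_N, 0 <= G t) -> 0 <= Ek k G.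
Proof.
move=> h; rewrite /Ek; apply: mulr_ge0; first by rewrite invr_ge0 ler0n.
by apply: sumr_ge0 => t _.
Qed.

Lemma Ek_lin k G H (a b : R) :
  Ek k (fun t => G t - a * H t + b) = Ek k G - a * Ek k H + b.
Proof.
rewrite /Ek !big_split /= sumrN sumr_const card_tuple card_ord -mulr_sumr.
rewrite -[b *+ _]mulr_natl.
have hn := NkR_neq0 k.
set m := ((N ^ k)%:R : R) in hn *.
set sG := \sum_(t : k.-tuple 'I_N) G t. set sH := \sum_(t : k.-tuple 'I_N) H t.
have -> : m^-1 * (sG - a * sH + m * b) = m^-1 * sG - a * (m^-1 * sH) + (m^-1 * m) * b by ring.
by rewrite mulVf // mul1r.
Qed.

Lemma Ek0 G : Ek 0 G = G [::].
Proof.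
rewrite /Ek expn0 invr1 mul1r (eq_bigr (fun _ => G [::])).
  by rewrite sumr_const card_tuple expn0.
by move=> t _; rewrite tuple0.
Qed.

Lemma Ek_take k j G : (j <= k)%N -> Ek k (fun t => G (take j t)) = Ek j G.
Proof.
elim: k => [|k IH] hj.
  by move: hj; rewrite leqn0 => /eqP ->; apply: Ek_ext => t; rewrite take0 tuple0.
case: (ltngtP j k.+1) hj => // [hlt|->] _; last first.
  by apply: Ek_ext => t; rewrite take_oversize // size_tuple.
rewrite Ek_step -IH //.
apply: Ek_ext => t.
rewrite (eq_bigr (fun _ => G (take j t))); last first.
  by move=> i _; rewrite -cats1 takel_cat // size_tuple.
by rewrite sumr_const card_ord -[G _ *+ _]mulr_natl mulrA mulVf ?nR_neq0 // mul1r.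
Qed.
End Expect.

Section Final.
Variables (R : realType) (S : finType) (d : nat).
Variables (phi : S -> 'cV[R]_d) (r : S -> S -> R) (gamma : R).
Variables (N : nat) (traj : nat -> S).
Hypothesis N0 : (0 < N)%N.
Hypothesis Au : A_d phi gamma N traj \in unitmx.
Hypothesis phi1 : forall s, \sum_(k < d) (phi s k 0) ^+ 2 <= 1.
Hypothesis g0 : 0 <= gamma.
Hypothesis g1 : gamma < 1.
Hypothesis bal : traj N = traj 0%N.
Variable lam : R.
Hypothesis Hev : forall mu, eigenvalue ((2%:R)^-1 *: (A_d phi gamma N traj + (A_d phi gamma N traj)^T)) mu ->
     lam <= mu.
Hypothesis lam0 : 0 < lam.

Local Notation Ad := (A_d phi gamma N traj).
Local Notation ts := (theta_star phi r gamma N traj).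
Local Notation f := (f_d phi r gamma N traj).

Lemma f_ray (tt : 'cV[R]_d) : lam * dotv (tt - ts) (tt - ts) <= f tt.
Proof.
set x := tt - ts.
have sym : ((2%:R)^-1 *: (Ad + Ad^T))^T = (2%:R)^-1 *: (Ad + Ad^T).
  by rewrite linearZ /= linearD /= trmxK addrC.
have := rayleigh sym Hev x.
have -> : (x^T *m ((2%:R)^-1 *: (Ad + Ad^T)) *m x) 0 0 = f tt.
  rewrite -scalemxAr -scalemxAl mxE (mulmxDr x^T Ad Ad^T) mulmxDl mxE.
  have -> : (x^T *m Ad^T *m x) 0 0 = (x^T *m Ad *m x) 0 0.
    have e : x^T *m Ad^T *m x = (x^T *m Ad *m x)^T by rewrite !trmx_mul trmxK mulmxA.
    by rewrite e [LHS]mxE.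
  rewrite /f_d -/x.
  set z := (x^T *m Ad *m x) 0 0; lra.
done.
Qed.

Lemma f_ge0 tt : 0 <= f tt.
Proof.
apply: le_trans (f_ray tt); apply: mulr_ge0; [exact: ltW | exact: dotv_ge0].
Qed.

Lemma epoch_bound (M : nat) (M0 : (0 < M)%N) (HM : 16%:R / lam <= M%:R) tt :
  epoch_exp phi r gamma N traj (8%:R)^-1 M f tt <= 2%:R / 3%:R * f tt.
Proof.
pose inn := fun s : seq 'I_N => inner_iter phi r gamma traj (8%:R)^-1 tt s.
pose Phi := fun s => dotv (inn s - ts) (inn s - ts).
pose Fk := fun s => f (inn s).
have step : forall s, N%:R^-1 * \sum_i Phi (rcons s i) <= Phi s - 3%:R / 16%:R * Fk s + 16%:R^-1 * f tt.
  move=> s; rewrite /Phi /Fk /inn /inner_iter.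
  under eq_bigr do rewrite foldl_rcons.
  exact: one_step.
have tele : forall K, Ek K Phi + 3%:R / 16%:R * \sum_(k < K) Ek k Fk <= Phi [::] + K%:R / 16%:R * f tt.
  elim => [|K IH]; first by rewrite Ek0 big_ord0 mulr0 addr0 !mul0r addr0.
  rewrite Ek_step // big_ord_recr /=.
  have := @Ek_le R N K (fun s => N%:R^-1 * \sum_i Phi (rcons s i)) (fun s => Phi s - 3%:R / 16%:R * Fk s + 16%:R^-1 * f tt) (fun t => step t).
  rewrite Ek_lin //.
  have hK : (K.+1%:R : R) = K%:R + 1 by rewrite -addn1 natrD.
  rewrite hK; lra.
have Ee : epoch_exp phi r gamma N traj (8%:R)^-1 M f tt = M%:R^-1 * \sum_(k < M) Ek k Fk.
  rewrite /epoch_exp exchange_big /= invfM (mulrC ((N ^ M)%:R^-1)) -mulrA mulr_sumr; congr (_ * _).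
  apply: eq_bigr => k _.
  by rewrite -(Ek_take N0 Fk (ltnW (ltn_ord k))).
rewrite Ee.
have := tele M.
have EM : 0 <= Ek M Phi by apply: Ek_ge0 => t; exact: dotv_ge0.
have Hr := f_ray tt.
have n2 : 0 <= dotv (tt - ts) (tt - ts) by exact: dotv_ge0.
rewrite /Phi /inn /= -/(f tt).
set E := \sum_(k < M) Ek k Fk.
set n := dotv (tt - ts) (tt - ts) in Hr n2 *.
set F := f tt in Hr *.
have Mpos : 0 < (M%:R : R) by rewrite ltr0n.
have h16 : 16%:R <= M%:R * lam by rewrite -ler_pdivrMr.
have h1 : 16%:R * n <= M%:R * lam * n by apply: ler_wpM2r.
have h2 : M%:R * (lam * n) <= M%:R * F by apply: ler_wpM2l => //; exact: ltW.
move=> H.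
rewrite mulrC ler_pdivrMr //.
have : 0 <= F by apply: le_trans Hr; apply: mulr_ge0 => //; exact: ltW.
rewrite mulrA in h2.
lra.
Qed.

End Final.

Lemma epoch_mono (R : realType) (S : finType) (d : nat) (phi : S -> 'cV[R]_d) r gamma N traj al M
  (h h' : 'cV[R]_d -> R) th :
  (forall x, h x <= h' x) ->
  epoch_exp phi r gamma N traj al M h th <= epoch_exp phi r gamma N traj al M h' th.
Proof.
move=> H; rewrite /epoch_exp; apply: ler_wpM2l; first by rewrite invr_ge0 mulr_ge0 // ler0n.
by apply: ler_sum => t _; apply: ler_sum => k _.
Qed.

Lemma epoch_scale (R : realType) (S : finType) (d : nat) (phi : S -> 'cV[R]_d) r gamma N traj al M
  (h : 'cV[R]_d -> R) (cc : R) th :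
  epoch_exp phi r gamma N traj al M (fun x => cc * h x) th = cc * epoch_exp phi r gamma N traj al M h th.
Proof.
rewrite /epoch_exp mulrCA; congr (_ * _).
rewrite mulr_sumr; apply: eq_bigr => t _; rewrite mulr_sumr; done.
Qed.

Theorem corollary1 (R : realType) (S : finType) (d : nat)
  (phi : S -> 'cV[R]_d) (r : S -> S -> R) (gamma : R)
  (N : nat) (traj : nat -> S) (M : nat) (lambda_A : R) (theta0 : 'cV[R]_d) (m : nat) :
  (0 < N)%N ->
  (forall s, \sum_(k < d) (phi s k 0) ^+ 2 <= 1) ->
  0 <= gamma -> gamma < 1 ->
  A_d phi gamma N traj \in unitmx ->
  eigenvalue ((2%:R)^-1 *: (A_d phi gamma N traj + (A_d phi gamma N traj)^T)) lambda_A ->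
  (forall mu, eigenvalue ((2%:R)^-1 *: (A_d phi gamma N traj + (A_d phi gamma N traj)^T)) mu ->
     lambda_A <= mu) ->
  0 < lambda_A ->
  traj N = traj 0%N ->
  (0 < M)%N ->
  16%:R / lambda_A <= M%:R ->
  expect_after phi r gamma N traj (8%:R)^-1 M m (f_d phi r gamma N traj) theta0
    <= (2%:R / 3%:R) ^+ m * f_d phi r gamma N traj theta0.
Proof.
move=> N0 phi1 g0 g1 Au _ Hev lam0 bal M0 HM.
have EB := @epoch_bound R S d phi r gamma N traj N0 Au phi1 g0 g1 bal lambda_A Hev lam0 M M0 HM.
rewrite /expect_after.
elim: m theta0 => [|m IH] th; first by rewrite /= expr0 mul1r.
rewrite iterS.
apply: (le_trans (@epoch_mono R S d phi r gamma N traj (8%:R)^-1 M _ (fun x => (2%:R / 3%:R) ^+ m * f_d phi r gamma N traj x) th IH)).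
rewrite epoch_scale exprSr -mulrA.
apply: ler_wpM2l; first by apply: exprn_ge0; rewrite divr_ge0 ?ler0n.
exact: EB.
Qed.
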